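(* Let $R$ be a ranking profile over $m$ candidates and let $\rhd$ be a ranking that is rank-priceable for $R$. Then $\rhd$ satisfies unanimous proportional justified representation (uPJR) for $R$, i.e., $u(\succ,\rhd)\geq\lfloor R(\succ)\binom{m}{2}\rfloor$ for all $\succ\in\mathcal{R}$.
   Context: Let $C$ be a set of $m$ candidates. A ranking is a strict linear order over $C$; $\mathcal{R}$ denotes the set of all rankings over $C$. A ranking profile is a function $R:\mathcal{R}\to[0,1]$ with $\sum_{\succ\in\mathcal{R}}R(\succ)=1$. For rankings $\succ,\rhd$, $u(\succ,\rhd)=|\{(x,y)\in C^2: x\succ y \text{ and } x\rhd y\}|$, and for $x\in X\subseteq C$, $u(\succ,x,X)=|\{y\in X\setminus\{x\}: x\succ y\}|$. A ranking $\rhd=x_1,\dots,x_m$ (i.e., $x_1\rhd x_2\rhd\dots\rhd x_m$) is rank-priceable for $R$ if there is $\pi:\mathcal{R}\times C\to\mathbb{R}$ such that (1) $0\leq\pi(\succ,x_i)\leq u(\succ,x_i,\{x_i,\dots,x_m\})$ for all $\succ\in\mathcal{R}$ and all $i$; (2) $\sum_{i=1}^m\pi(\succ,x_i)\leq\binom{m}{2}R(\succ)$ for all $\succ\in\mathcal{R}$; (3) $\sum_{\succ\in\mathcal{R}}\pi(\succ,x_i)\leq m-i$ for all $i\in\{1,\dots,m\}$; (4) $\sum_{\succ\in\mathcal{R}}\sum_{i=1}^m\pi(\succ,x_i)>\binom{m}{2}-1$. *)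

(* Defs.v *)
(* Candidates are 'I_m; a ranking is a permutation
   s : {perm 'I_m} listing candidates by position: s i is the candidate
   ranked at position i (0 = top). *)
From HB Require Import structures.
From mathcomp Require Import all_boot all_order all_algebra all_fingroup.
From mathcomp Require Import reals.
Set Implicit Arguments. Unset Strict Implicit. Unset Printing Implicit Defensive.
Import Order.TTheory GRing.Theory Num.Theory.

Definition ranking (m : nat) := {perm 'I_m}.

Definition prefers (m : nat) (s : ranking m) (x y : 'I_m) : bool :=
  (nat_of_ord ((s^-1)%g x) < nat_of_ord ((s^-1)%g y))%N.

Definition u_pair (m : nat) (s t : ranking m) : nat :=
  #|[set p : 'I_m * 'I_m | prefers s p.1 p.2 && prefers t p.1 p.2]|.

Definition u_set (m : nat) (s : ranking m) (x : 'I_m) (X : {set 'I_m}) : nat :=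
  #|[set y in X | (y != x) && prefers s x y]|.

Definition suffix_set (m : nat) (t : ranking m) (i : 'I_m) : {set 'I_m} :=
  [set t j | j : 'I_m & (i <= j)%N].

Definition is_profile (R : realType) (m : nat) (P : ranking m -> R) : Prop :=
  (forall s, 0 <= P s)%R /\ (\sum_(s : ranking m) P s = 1)%R.

Local Open Scope ring_scope.

(* rank-priceability; position i (0-indexed) corresponds to x_{i+1} *)
Definition rank_priceable (R : realType) (m : nat) (P : ranking m -> R)
    (t : ranking m) : Prop :=
  exists pi : ranking m -> 'I_m -> R,
    [/\ (forall s (i : 'I_m), 0 <= pi s (t i) /\
            pi s (t i) <= (u_set s (t i) (suffix_set t i))%:R),
        (forall s, \sum_(i < m) pi s (t i) <= ('C(m, 2))%:R * P s),
        (forall i : 'I_m, \sum_(s : ranking m) pi s (t i) <= (m - i.+1)%:R) &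
        \sum_(s : ranking m) \sum_(i < m) pi s (t i) > ('C(m, 2))%:R - 1].

Definition uPJR (R : realType) (m : nat) (P : ranking m -> R) (t : ranking m) : Prop :=
  forall s : ranking m, Num.floor (P s * ('C(m, 2))%:R) <= (u_pair s t)%:Z.

(* Main.v *)
Require Import Defs.
From mathcomp Require Import all_boot all_order all_algebra all_fingroup.
From mathcomp Require Import reals.
Import Order.TTheory GRing.Theory Num.Theory.

Lemma card_sum_ind (T : finType) (A : {set T}) :
  #|A| = (\sum_(x : T) (x \in A : nat))%N.
Proof. by rewrite -sum1_card big_mkcond /=; apply: eq_bigr => x _; case: (x \in A). Qed.

Lemma key m (s t : ranking m) :
  (\sum_(i < m) u_set s (t i) (suffix_set t i) <= u_pair s t)%N.
Proof.
have -> : u_pair s t = (\sum_(x : 'I_m) \sum_(y : 'I_m)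
            ((prefers s x y && prefers t x y) : nat))%N.
  rewrite /u_pair card_sum_ind pair_big /=.
  by apply: eq_bigr => -[x y] _; rewrite inE.
rewrite [X in (_ <= X)%N](reindex_inj (@perm_inj _ t)) /=.
apply: leq_sum => i _.
rewrite /u_set card_sum_ind; apply: leq_sum => y _.
rewrite inE.
case yA: (_ && _) => //=.
move/andP: yA => [/imsetP [j] ] ; rewrite inE => ij -> /andP [ne ps].
rewrite ps /= /prefers !permK.
have ij' : (i <= j)%N := ij.
rewrite lt0b ltn_neqAle ij' andbT.
apply/eqP => E; move: ne; by rewrite (val_inj E) eqxx.
Qed.

Local Open Scope ring_scope.

Theorem mainTheorem3 (R : realType) (m : nat) (P : ranking m -> R) (t : ranking m) :
  is_profile P -> rank_priceable P t -> uPJR P t.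
Proof.
move=> [P0 P1] [pi [Hb Hs _ Ht]] s.
set C := ('C(m, 2))%:R : R.
have Hu : forall s', \sum_(i < m) pi s' (t i) <= (u_pair s' t)%:R.
  move=> s'; have K : (\sum_(i < m) u_set s' (t i) (suffix_set t i))%:R <= (u_pair s' t)%:R :> R.
    by rewrite ler_nat key.
  apply: le_trans K.
  rewrite natr_sum; apply: ler_sum => i _; exact: (Hb s' i).2.
rewrite leNgt; apply/negP => H.
have H1 : (u_pair s t)%:R + 1 <= P s * C.
  apply: le_trans (floor_le _).
  rewrite -lezD1 in H.
  have := H; rewrite -(ler_int R) => H2.
  by apply: le_trans H2; rewrite rmorphD /=.
have Hps : \sum_(i < m) pi s (t i) <= C * P s - 1.
  rewrite lerBrDr mulrC; exact: le_trans (lerD (Hu s) (lexx 1)) H1.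
have : \sum_(s' : ranking m) \sum_(i < m) pi s' (t i) <= C - 1.
  rewrite (bigD1 s) //=.
  apply: le_trans (lerD Hps (ler_sum _ (fun s' _ => Hs s'))) _.
  rewrite -mulr_sumr addrAC -mulrDr.
  by rewrite -(bigD1 s (P := xpredT)) //= P1 mulr1.
by move=> /(lt_le_trans Ht); rewrite ltxx.
Qed.
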